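(* Let $g(t)=\sum_{n\ge0}g_nt^n$ be a rational function regular for $|t|<1$ having a pole at $t=1$ whose order is maximal among the orders of the poles of $g$. Let $p(t),q(t)$ be polynomials with $q(1)\ne0$, and let $s(t)=p(t)g(t)=\sum_ns_nt^n$ and $d(t)=q(t)g(t)=\sum_nd_nt^n$. Then the limits $$\lim_{t\to1^-}\frac{s(t)}{d(t)},\qquad\lim_{N\to\infty}\frac{\sum_{n\le N}s_n}{\sum_{n\le N}d_n}$$ both exist and equal $p(1)/q(1)$. *)

(* Defs.v *)
From HB Require Import structures.
From mathcomp Require Import all_boot all_order all_algebra.
From mathcomp Require Import all_classical all_reals all_analysis.
From mathcomp Require Import complex.
Set Implicit Arguments. Unset Strict Implicit. Unset Printing Implicit Defensive.
Import Order.TTheory GRing.Theory Num.Theory.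
Import numFieldNormedType.Exports.
Local Open Scope ring_scope.

(* Convolution coefficient of a polynomial with a sequence:
   the n-th coefficient of the formal power series  a(t) * (sum_k c_k t^k). *)
Definition pconv (R : ringType) (a : {poly R}) (c : nat -> R) (n : nat) : R :=
  \sum_(k < n.+1) a`_k * c (n - k)%N.

(* [c] is the sequence of Taylor coefficients at 0 of the rational function
   P/Q (with Q(0) <> 0), i.e. Q(t) * (sum_n c_n t^n) = P(t) as formal power
   series. *)
Definition taylor_coefs (R : ringType) (P Q : {poly R}) (c : nat -> R) : Prop :=
  forall n, pconv Q c n = P`_n.

(* Main.v *)
Require Import Defs.
From HB Require Import structures.
From mathcomp Require Import all_boot all_order all_algebra.
From mathcomp Require Import all_classical all_reals all_analysis.
From mathcomp Require Import complex.
From mathcomp Require Import zify ring.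
Import Order.TTheory GRing.Theory Num.Theory.
Import numFieldNormedType.Exports.
Local Open Scope ring_scope.
Set Implicit Arguments. Unset Strict Implicit. Unset Printing Implicit Defensive.

Section Conv.
Variable C : numClosedFieldType.
Implicit Types (a b u v A B : {poly C}) (c w : nat -> C).

Definition trunc c n : {poly C} := \poly_(i < n.+1) c i.

Lemma pconv_trunc a c {n i} : (i <= n)%N -> pconv a c i = (a * trunc c n)`_i.
Proof.
move=> hi; rewrite /pconv coefM; apply: eq_bigr => k _.
rewrite coef_poly ifT //; apply: leq_ltn_trans (leq_subr _ _) _; by rewrite ltnS.
Qed.

Lemma pconv_ext a c w n : (forall i, (i <= n)%N -> c i = w i) -> pconv a c n = pconv a w n.
Proof.
move=> h; apply: eq_bigr => k _; rewrite h //; exact: leq_subr.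
Qed.


Lemma pconv_coef a b n : pconv a (fun i => b`_i) n = (a * b)`_n.
Proof. by rewrite /pconv coefM. Qed.

Lemma pconvM a b c n : pconv (a * b) c n = pconv a (pconv b c) n.
Proof.
rewrite (pconv_trunc _ _ (leqnn n)) -mulrA -pconv_coef.
apply: eq_bigr => k _; rewrite (pconv_trunc _ _ (leq_subr k n)) //.
Qed.

Lemma pconvD a b c n : pconv (a + b) c n = pconv a c n + pconv b c n.
Proof.
rewrite !(pconv_trunc _ _ (leqnn n)) mulrDl coefD //.
Qed.

Lemma pconvN a c n : pconv (- a) c n = - pconv a c n.
Proof. by rewrite !(pconv_trunc _ _ (leqnn n)) mulNr coefN. Qed.

Lemma pconvB a b c n : pconv (a - b) c n = pconv a c n - pconv b c n.
Proof. by rewrite pconvD pconvN. Qed.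

Lemma pconvC k c n : pconv k%:P c n = k * c n.
Proof. by rewrite (pconv_trunc _ _ (leqnn n)) coefCM coef_poly ltnSn. Qed.

Lemma pconv1 c n : pconv 1 c n = c n.
Proof. by rewrite pconvC mul1r. Qed.

Lemma pconvX c n : pconv 'X c n = if n is n'.+1 then c n' else 0.
Proof.
rewrite (pconv_trunc _ _ (leqnn n)) coefXM; case: n => //= n.
by rewrite coef_poly ltnS leqnSn.
Qed.

Lemma pconv_addseq a c w n : pconv a (fun i => c i + w i) n = pconv a c n + pconv a w n.
Proof. by rewrite /pconv -big_split; apply: eq_bigr => k _; rewrite mulrDr. Qed.

Lemma pconv_subseq a c w n : pconv a (fun i => c i - w i) n = pconv a c n - pconv a w n.
Proof. by rewrite /pconv -sumrB; apply: eq_bigr => k _; rewrite mulrBr. Qed.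

Lemma pconv_scaleseq a k c n : pconv a (fun i => k * c i) n = k * pconv a c n.
Proof. by rewrite /pconv mulr_sumr; apply: eq_bigr => i _; rewrite mulrCA. Qed.

Lemma pconv_eq0 a w : a`_0 != 0 -> (forall n, pconv a w n = 0) -> forall n, w n = 0.
Proof.
move=> a0 h; elim/ltn_ind => n IH.
have := h n; rewrite /pconv big_ord_recl subn0 /= big1 ?addr0.
  by move/eqP; rewrite mulf_eq0 (negPf a0) => /eqP.
move=> k _; rewrite IH ?mulr0 //.
rewrite /bump /= add1n; case: n IH k => [|n] IH k; first by case: k.
by rewrite subSS ltnS leq_subr.
Qed.

Lemma pconv_inj a c w : a`_0 != 0 -> (forall n, pconv a c n = pconv a w n) -> forall n, c n = w n.
Proof.
move=> a0 h n; apply/eqP; rewrite -subr_eq0; apply/eqP.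
apply: (@pconv_eq0 a (fun i => c i - w i) a0) => m.
by rewrite pconv_subseq h subrr.
Qed.

End Conv.
Section Bounds.
Variable C : numClosedFieldType.
Implicit Types (a b u v A B : {poly C}) (c w : nat -> C).

Definition normsum u : C := \sum_(i < size u) `|u`_i|.
Definition Obig c k := exists K : C, 0 <= K /\ forall n, `|c n| <= K * (n.+1)%:R ^+ k.

Lemma normsum_ge0 u : 0 <= normsum u.
Proof. by apply: sumr_ge0 => i _. Qed.

Lemma sum_le_normsum u n : \sum_(i < n) `|u`_i| <= normsum u.
Proof.
rewrite /normsum -!(big_mkord xpredT (fun i => `|u`_i|)).
case: (leqP n (size u)) => h.
  rewrite (@big_cat_nat _ _ _ n 0 (size u) _ _ (leq0n n) h) /= lerDl; exact: sumr_ge0.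
rewrite (@big_cat_nat _ _ _ (size u) 0 n _ _ (leq0n _) (ltnW h)) /= [X in _ + X](_ : _ = 0) ?addr0 //.
rewrite big_nat_cond big1 // => i /andP[/andP[hi _] _]; by rewrite nth_default // normr0.
Qed.

Lemma coef_le_normsum u n : `|u`_n| <= normsum u.
Proof.
apply: le_trans (sum_le_normsum u n.+1).
rewrite big_ord_recr /= lerDr; exact: sumr_ge0.
Qed.

Lemma natpow_ge1 n k : 1 <= (n.+1)%:R ^+ k :> C.
Proof. by rewrite -natrX ler1n expn_gt0. Qed.

Lemma natpow_mono n m k : (n <= m)%N -> (n.+1)%:R ^+ k <= (m.+1)%:R ^+ k :> C.
Proof. move=> h; case: k => [|k]; first by rewrite !expr0. by rewrite -!natrX ler_nat leq_exp2r. Qed.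

Lemma natpow_monok n k1 k2 : (k1 <= k2)%N -> (n.+1)%:R ^+ k1 <= (n.+1)%:R ^+ k2 :> C.
Proof. by move=> h; rewrite -!natrX ler_nat leq_pexp2l. Qed.

Lemma Obig_le c k1 k2 : Obig c k1 -> (k1 <= k2)%N -> Obig c k2.
Proof.
move=> [K [K0 h]] hk; exists K; split => // n.
apply: le_trans (h n) _; apply: ler_wpM2l => //; exact: natpow_monok.
Qed.

Lemma Obig_coef A : Obig (fun n => A`_n) 0.
Proof.
exists (normsum A); split; first exact: normsum_ge0.
by move=> n; rewrite expr0 mulr1 coef_le_normsum.
Qed.

Lemma Obig_add c w k : Obig c k -> Obig w k -> Obig (fun n => c n + w n) k.
Proof.
move=> [K [K0 h]] [L [L0 h']]; exists (K + L); split; first exact: addr_ge0.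
move=> n; apply: le_trans (ler_normD _ _) _; rewrite mulrDl; exact: lerD.
Qed.

Lemma Obig_scale c k x : Obig c k -> Obig (fun n => x * c n) k.
Proof.
move=> [K [K0 h]]; exists (`|x| * K); split; first by rewrite mulr_ge0.
by move=> n; rewrite normrM -mulrA ler_wpM2l.
Qed.

Lemma Obig_ext c w k : (forall n, c n = w n) -> Obig c k -> Obig w k.
Proof. by move=> e [K [K0 h]]; exists K; split => // n; rewrite -e. Qed.

Lemma Obig_pconv u c k : Obig c k -> Obig (pconv u c) k.
Proof.
move=> [K [K0 h]]; exists (normsum u * K); split; first by rewrite mulr_ge0 ?normsum_ge0.
move=> n; apply: le_trans (ler_norm_sum _ _ _) _.
apply: (@le_trans _ _ (\sum_(i < n.+1) `|u`_i| * (K * (n.+1)%:R ^+ k))) _.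
  apply: ler_sum => i _; rewrite normrM ler_wpM2l //.
  apply: le_trans (h _) _; apply: ler_wpM2l => //; apply: natpow_mono; exact: leq_subr.
rewrite -mulr_suml -mulrA ler_wpM2r ?sum_le_normsum //.
by rewrite mulr_ge0 // (le_trans ler01 (natpow_ge1 _ _)).
Qed.

End Bounds.
Arguments Obig {C}. Arguments normsum {C}.
Section General.
Variable C : numClosedFieldType.
Implicit Types (a b u v A B : {poly C}) (c : nat -> C).

Lemma pconvXsubC z c n : pconv ('X - z%:P) c n = (if n is n'.+1 then c n' else 0) - z * c n.
Proof. by rewrite pconvB pconvX pconvC. Qed.

Lemma step_bound z c c' : 1 <= `|z| -> (forall n, pconv ('X - z%:P) c n = c' n) ->
  forall n, `|c n| <= \sum_(i < n.+1) `|c' i|.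
Proof.
move=> hz h; elim=> [|n IH].
  rewrite big_ord1 -h pconvXsubC sub0r normrN normrM; exact: ler_peMl.
rewrite big_ord_recr /=.
have e : z * c n.+1 = c n - c' n.+1 by rewrite -h pconvXsubC opprB addrC subrK.
apply: (@le_trans _ _ (`|z| * `|c n.+1|)); first exact: ler_peMl.
rewrite -normrM e; apply: le_trans (ler_normB _ _) _; exact: lerD.
Qed.

Lemma single_root z : 1 <= `|z| -> forall j A c,
  (forall n, pconv (('X - z%:P) ^+ j.+1) c n = A`_n) -> Obig c j.
Proof.
move=> hz; elim=> [|j IH] A c h.
  exists (normsum A); split; first exact: normsum_ge0.
  move=> n; rewrite expr0 mulr1; apply: le_trans _ (sum_le_normsum A n.+1).
  apply: step_bound hz _ n => m; by rewrite -h expr1.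
have hc' n : pconv (('X - z%:P) ^+ j.+1) (pconv ('X - z%:P) c) n = A`_n.
  by rewrite -pconvM -exprSr h.
have [K [K0 hK]] := IH A (pconv ('X - z%:P) c) hc'.
exists K; split => // n.
apply: le_trans (step_bound hz (fun m => erefl) n) _.
apply: (@le_trans _ _ (\sum_(i < n.+1) K * (n.+1)%:R ^+ j)).
  apply: ler_sum => i _; apply: le_trans (hK i) _; apply: ler_wpM2l => //.
  apply: natpow_mono; by rewrite -ltnS.
by rewrite sumr_const card_ord exprSr mulrA mulr_natr.
Qed.

Lemma general_bound (k : nat) B : B != 0 -> (forall z, root B z -> 1 <= `|z|) ->
  (forall z, (mup z B <= k.+1)%N) -> forall A c, (forall n, pconv B c n = A`_n) -> Obig c k.
Proof.
have [N] := ubnP (size B); elim: N B => // N IH B /ltnSE hsz B0 hroot hmup A c hc.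
have [/closed_rootP [z hz] | /negPn hB1] := boolP (size B != 1); last first.
  have eB : B = (B`_0)%:P by apply: size1_polyC; rewrite (eqP hB1).
  have b0 : B`_0 != 0 by apply: contra B0 => /eqP b0; rewrite eB b0.
  apply: Obig_le (leq0n k).
  apply: (@Obig_ext _ (fun n => (B`_0)^-1 * A`_n)); last exact/Obig_scale/Obig_coef.
  by move=> n; rewrite -hc [X in pconv X _ _]eB pconvC mulKf.
set j := mup z B.
have hj : (0 < j)%N by rewrite /j mup_geq // expr1 dvdp_XsubCl.
have [j' ej] : exists j', j = j'.+1 by case: (j) hj => // j' _; exists j'.
set U := ('X - z%:P) ^+ j.
have hU : U %| B by rewrite -mup_geq.
set V := B %/ U.
have eB : B = V * U by rewrite divpK.
have U0 : U != 0 by rewrite expf_neq0 // polyXsubC_eq0.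
have V0 : V != 0 by apply: contra B0 => /eqP V0; rewrite eB V0 mul0r.
have mupU w : mup w U = if z == w then j else 0%N by rewrite mup_XsubCX.
have mupV w : (mup w V <= mup w B)%N by rewrite [in X in (_ <= X)%N]eB mupM // leq_addr.
have hVz : ~~ root V z.
  apply/negP => rV; have : (1 <= mup z V)%N by rewrite mup_geq // expr1 dvdp_XsubCl.
  have := mupM z V0 U0; rewrite -eB -/j mupU eqxx => /(congr1 (fun x => x - j)%N).
  by rewrite subnn addnK => <-.
have hjk : (j <= k.+1)%N by apply: hmup.
have hcU n : pconv V (pconv U c) n = A`_n by rewrite -pconvM -eB.
have hcV n : pconv U (pconv V c) n = A`_n by rewrite -pconvM mulrC -eB.
have [hV1 | /negPn hV1] := boolP (size V != 1); last first.
  have eV : V = (V`_0)%:P by apply: size1_polyC; rewrite (eqP hV1).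
  have v0 : V`_0 != 0 by apply: contra V0 => /eqP v0; rewrite eV v0.
  apply: (@Obig_le _ _ j'); last by rewrite -ltnS -ej.
  apply: (@single_root z (hroot z hz) j' ((V`_0)^-1 *: A) c) => n.
  have hv : pconv V (pconv U c) n = V`_0 * pconv U c n by rewrite {1}eV pconvC.
  by rewrite -ej coefZ -hcU hv mulKf.
have cop : coprimep U V.
  by rewrite coprimep_expl // coprimep_sym coprimep_XsubC.
have [[u v] /= huv] := Bezout_eq1_coprimepP _ _ cop.
have szV : (1 < size V)%N.
  by rewrite ltn_neqAle eq_sym hV1 lt0n size_poly_eq0.
have szU : (1 < size U)%N by rewrite size_exp_XsubC ltnS.
have szB : size B = (size V + size U).-1 by rewrite eB size_mul.
have OV : Obig (pconv U c) k.
  apply: (IH V _ V0 _ _ A) => //.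
  - apply: leq_trans hsz; rewrite szB -subn1 -addnBA ?(ltnW szU) //.
    by rewrite -{1}[size V]addn0 ltn_add2l subn_gt0.
  - move=> w rw; apply: hroot; by rewrite eB rootM rw.
  - move=> w; exact: leq_trans (mupV w) (hmup w).
have OU : Obig (pconv V c) k.
  apply: (IH U _ U0 _ _ A) => //.
  - apply: leq_trans hsz; rewrite szB -subn1 addnC -addnBA ?(ltnW szV) //.
    by rewrite -{1}[size U]addn0 ltn_add2l subn_gt0.
  - move=> w; rewrite /U ej root_exp_XsubC => /eqP ->; exact: hroot.
  - move=> w; rewrite mupU; case: eqP => // _.
apply: (@Obig_ext _ (fun n => pconv u (pconv U c) n + pconv v (pconv V c) n)).
  by move=> n; rewrite -!pconvM -pconvD huv pconv1.
by apply: Obig_add; apply: Obig_pconv.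
Qed.

End General.
Section BinNat.
Local Open Scope nat_scope.
Lemma bin_upper n j : ('C(n + j, j) <= n.+1 ^ j)%N.
Proof.
elim: j => [|j IH]; first by rewrite bin0 expn0.
have e := mul_bin_diag (n + j).+1 j; rewrite /= in e.
have h1 : (j.+1 * 'C(n + j.+1, j.+1) <= j.+1 * n.+1 ^ j.+1)%N.
  rewrite addnS -e expnS mulnA; apply: leq_mul => //.
  nia.
by rewrite leq_pmul2l in h1.
Qed.

Lemma bin_lower n j : (n.+1 ^ j <= 'C(n + j, j) * j`!)%N.
Proof.
elim: j => [|j IH]; first by rewrite bin0 expn0.
have e := mul_bin_diag (n + j).+1 j; rewrite /= in e.
rewrite addnS factS expnS.
apply: leq_trans (leq_mul (leqnn n.+1) IH) _.
apply: (@leq_trans ((n + j).+1 * ('C(n + j, j) * j`!))).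
  by apply: leq_mul; rewrite // ltnS leq_addr.
by rewrite mulnA e -mulnA mulnCA.
Qed.

End BinNat.

Section Main.
Variable C : numClosedFieldType.
Implicit Types (a b u v A B : {poly C}) (c : nat -> C).

Definition Eb (j n : nat) : C := ('C((n + j)%N, j))%:R.

Lemma pconv_aX c n : pconv (1 - 'X) c n = c n - (if n is n'.+1 then c n' else 0).
Proof. by rewrite pconvB pconv1 pconvX. Qed.

Lemma pconv_Eb j n : pconv (1 - 'X) (Eb j.+1) n = Eb j n.
Proof.
rewrite pconv_aX /Eb; case: n => [|n]; first by rewrite !add0n !binn subr0.
by rewrite addSn binS natrD addrAC subrr add0r addnS addSn.
Qed.

Lemma pconv_Eb0 n : pconv (1 - 'X) (Eb 0) n = (1 : {poly C})`_n.
Proof.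
by rewrite pconv_aX /Eb coefC; case: n => [|n] /=; rewrite ?subr0 ?bin0 ?subrr.
Qed.

Lemma pconv_Eb_delta j n : pconv ((1 - 'X) ^+ j.+1) (Eb j) n = (1 : {poly C})`_n.
Proof.
elim: j n => [|j IH] n; first by rewrite expr1 pconv_Eb0.
rewrite exprSr pconvM -IH.
apply: pconv_ext => i _; exact: pconv_Eb.
Qed.

Lemma Obig_Eb j : Obig (Eb j) j.
Proof.
exists 1; split => // n; rewrite mul1r -natrX ger0_norm ?ler0n //.
by rewrite ler_nat bin_upper.
Qed.

Lemma pconv_psum (y : nat -> C) M :
  pconv (1 - 'X) (fun K => \sum_(n < K.+1) y n) M = y M.
Proof.
rewrite pconv_aX; case: M => [|M]; first by rewrite big_ord1 subr0.
by rewrite big_ord_recr /= addrAC subrr add0r.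
Qed.

Lemma pconvZ k a c n : pconv (k *: a) c n = k * pconv a c n.
Proof. by rewrite !(pconv_trunc _ _ (leqnn n)) -scalerAl coefZ. Qed.

Lemma pconv_sum q c N :
  \sum_(n < N.+1) pconv q c n = pconv q (fun M => \sum_(n < M.+1) c n) N.
Proof.
have hS := pconv_psum.
have a0 : (1 - 'X : {poly C})`_0 != 0 by rewrite coefB coef1 coefX subr0 oner_neq0.
apply: (@pconv_inj _ _ (fun N => \sum_(n < N.+1) pconv q c n) (fun N => pconv q (fun M => \sum_(n < M.+1) c n) N) a0) => n.
rewrite hS -pconvM mulrC pconvM; apply: pconv_ext => i _; by rewrite hS.
Qed.


Lemma main_seq (P Q : {poly C}) gn :
  coprimep P Q -> (forall z, `|z| < 1 -> ~~ root Q z) -> root Q 1 ->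
  (forall z, (mup z Q <= mup 1 Q)%N) -> taylor_coefs P Q gn ->
  exists (m : nat) (al : C), al != 0 /\ forall q : {poly C}, exists r, Obig r m /\
    forall N, \sum_(n < N.+1) pconv q gn n = al * q.[1] * Eb m.+1 N + r N.
Proof.
move=> cop hdisk hQ1 hmax htc.
have Q0 : Q != 0.
  apply/negP => /eqP Q0; have := hdisk 0; rewrite normr0 ltr01 Q0 root0.
  by move=> /(_ isT).
have [m eM] : exists m, mup 1 Q = m.+1.
  have : (0 < mup 1 Q)%N by rewrite mup_geq // expr1 dvdp_XsubCl.
  by case: (mup 1 Q) => // m _; exists m.
have hdiv : ('X - 1%:P) ^+ m.+1 %| Q by rewrite -mup_geq // eM.
set Q1 := Q %/ ('X - 1%:P) ^+ m.+1.
have eQ : Q = Q1 * ('X - 1%:P) ^+ m.+1 by rewrite divpK.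
have U0 : ('X - 1%:P) ^+ m.+1 != 0 :> {poly C} by rewrite expf_neq0 // polyXsubC_eq0.
have Q10 : Q1 != 0 by apply: contra Q0 => /eqP e; rewrite eQ e mul0r.
have Q1r : ~~ root Q1 1.
  apply/negP => rV; have : (1 <= mup 1 Q1)%N by rewrite mup_geq // expr1 dvdp_XsubCl.
  have := mupM 1 Q10 U0; rewrite -eQ eM mup_XsubCX eqxx => /(congr1 (fun x => x - m.+1)%N).
  by rewrite subnn addnK => <-.
have P1 : P.[1] != 0 by apply: (coprimep_root (p := Q)); rewrite // coprimep_sym.
set a : {poly C} := 1 - 'X.
have a0 : a`_0 != 0 by rewrite coefB coef1 coefX subr0 oner_neq0.
have eXa : 'X - 1%:P = - a by rewrite opprB.
set sg : C := (-1) ^+ m.+1.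
have sg0 : sg != 0 by rewrite signr_eq0.
set G := fun N => \sum_(n < N.+1) gn n.
have hG n : pconv (a * Q) G n = P`_n.
  rewrite mulrC pconvM -htc; apply: pconv_ext => i _; exact: pconv_psum.
have eaQ : a * Q = sg *: (Q1 * a ^+ m.+2).
  rewrite eQ eXa exprNn -mul_polyC rmorphXn /= polyCN polyC1.
  rewrite [a ^+ m.+2]exprS; set u := a ^+ m.+1; set s := (-1 : {poly C}) ^+ m.+1.
  ring.
have hQE n : pconv (a * Q) (Eb m.+1) n = sg * Q1`_n.
  have -> : Q1`_n = (Q1 * 1)`_n by rewrite mulr1.
  rewrite eaQ pconvZ pconvM -pconv_coef; congr (_ * _).
  apply: pconv_ext => i _; exact: pconv_Eb_delta.
set al := P.[1] / (sg * Q1.[1]).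
have sQ0 : sg * Q1.[1] != 0 by rewrite mulf_neq0.
have al0 : al != 0 by rewrite /al mulf_neq0 // invr_eq0.
set x := fun n => G n - al * Eb m.+1 n.
set F := P - (al * sg) *: Q1.
have hx n : pconv (a * Q) x n = F`_n.
  rewrite pconv_subseq pconv_scaleseq hG hQE /F coefB coefZ mulrA //.
have rF : root F 1.
  rewrite /root /F hornerD hornerN hornerZ -mulrA /al divfK // subrr //.
have [F2 eF] := factor_theorem _ _ rF.
have hx2 n : pconv Q x n = (- F2)`_n.
  apply: (@pconv_inj _ _ (pconv Q x) (fun i => (- F2)`_i) a0) => {}n.
  by rewrite -pconvM hx pconv_coef eF eXa mulrN mulrC mulrN.
have Ox : Obig x m.
  apply: (general_bound Q0 _ _ hx2) => [z hz|z]; last by rewrite -eM.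
  rewrite real_leNgt ?real1 ?normr_real //; apply/negP => hlt.
  by move: (hdisk z hlt); rewrite hz.
exists m, al; split => // q.
have rq : root (q - q.[1]%:P) 1 by rewrite /root hornerD hornerN hornerC subrr.
have [q3 eq3] := factor_theorem _ _ rq.
have eq : q = q.[1]%:P - q3 * a by rewrite -mulrN -eXa -eq3 addrCA subrr addr0.
exists (fun N => pconv q x N - al * pconv q3 (Eb m) N); split.
  apply: Obig_add; first exact: Obig_pconv.
  apply: (@Obig_ext _ (fun N => (- al) * pconv q3 (Eb m) N)); first by move=> N; rewrite mulNr.
  exact/Obig_scale/Obig_pconv/Obig_Eb.
move=> N; rewrite pconv_sum.
have -> : pconv q G N = pconv q (fun n => al * Eb m.+1 n + x n) N.
  by apply: pconv_ext => i _; rewrite /x addrC subrK.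
rewrite pconv_addseq pconv_scaleseq.
have -> : pconv q (Eb m.+1) N = q.[1] * Eb m.+1 N - pconv q3 (Eb m) N.
  rewrite {1}eq pconvB pconvC pconvM; congr (_ - _).
  apply: pconv_ext => i _; exact: pconv_Eb.
rewrite mulrBr mulrA; ring.
Qed.

End Main.

Section Analysis.
Variable R : realType.
Local Open Scope complex_scope.
Local Open Scope classical_set_scope.

Lemma archiC (x : R[i]) : x \is Num.real -> exists N : nat, x < N%:R.
Proof.
case/complex_realP => k ->; exists (Num.truncn k).+1.
by rewrite -(rmorph_nat (real_complex R)) ltcR truncnS_gt.
Qed.

Lemma normC_real (k : R) : `|k%:C| = `|k|%:C.
Proof. by rewrite normc_def /= expr0n /= addr0 sqrtr_sqr. Qed.

Lemma cvg0_harm (u : nat -> R[i]) (L : R[i]) : 0 <= L ->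
  (forall N, `|u N| <= L / (N.+1)%:R) -> (u : nat -> R[i]^o) @ \oo --> 0.
Proof.
move=> L0 hu; apply/cvgr0Pnorm_le => eps eps0.
have hr : L / eps \is Num.real by rewrite rpredM ?rpredV ?ger0_real ?gtr0_real ?(ltW eps0).
have [N0 hN0] := archiC hr.
exists N0 => // N /= hN; apply: le_trans (hu N) _.
rewrite ler_pdivrMr ?ltr0Sn //.
rewrite ltr_pdivrMr // in hN0; apply: le_trans (ltW hN0) _.
rewrite mulrC ler_wpM2l ?(ltW eps0) // ler_nat; exact: leqW.
Qed.

Lemma horner_cvg {T} (F : set_system T) {FF : Filter F} (f : T -> R[i]^o) (a : R[i]^o) (p : {poly R[i]}) :
  f @ F --> a -> (fun t => p.[f t] : R[i]^o) @ F --> (p.[a] : R[i]^o).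
Proof.
move=> hf; elim/poly_ind: p => [|p c IH].
  rewrite horner0 (_ : (fun t => _) = (fun _ => 0)); first exact: cvg_cst.
  by apply: funext => t; rewrite horner0.
have e : (fun t => (p * 'X + c%:P).[f t] : R[i]^o) =
    ((fun t => p.[f t] : R[i]^o) \* f) + cst (c : R[i]^o).
  by apply: funext => t; rewrite hornerMXaddC.
rewrite e hornerMXaddC; exact: cvgD (cvgM IH hf) (cvg_cst _).
Qed.

Lemma nbhs_dist (x k : R) : 0 < k -> \forall t \near x, `|x - t| < k.
Proof. by move=> k0; exact: (@cvgr_dist_lt _ R^o _ _ _ id x cvg_id k k0). Qed.

Lemma cvg_realC (x : R) : (fun t : R => (t%:C : R[i]^o)) @ x --> (x%:C : R[i]^o).
Proof.
apply/cvgrPdist_lt => eps eps0.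
have /complex_realP [k ek] := gtr0_real eps0.
rewrite ek ltcR in eps0; rewrite ek.
near=> t; rewrite -rmorphB normC_real ltcR.
near: t; exact: nbhs_dist.
Unshelve. all: by end_near. Qed.


Lemma cvg_addC {T} (F : set_system T) {FF : Filter F} (u : T -> R[i]) (a : R[i]) :
  (fun N => u N : R[i]^o) @ F --> (0 : R[i]^o) ->
  (fun N => (a + u N : R[i]^o)) @ F --> (a : R[i]^o).
Proof.
move=> h; rewrite -[X in _ --> X]addr0.
exact: (cvgD (cvg_cst (a : R[i]^o)) h).
Qed.

Lemma cvg_div {T} (F : set_system T) {FF : Filter F} (u v : T -> R[i]) (a b: R[i]) :
  (fun N => u N : R[i]^o) @ F --> (a : R[i]^o) ->
  (fun N => v N : R[i]^o) @ F --> (b : R[i]^o) -> b != 0 ->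
  (fun N => (u N / v N : R[i]^o)) @ F --> (a / b : R[i]^o).
Proof. move=> h1 h2 b0; exact: (cvgM h1 (cvgV b0 h2)). Qed.

Lemma Eb_gt0 m N : 0 < Eb R[i] m N.
Proof. by rewrite /Eb ltr0n bin_gt0 leq_addl. Qed.

Lemma ratio0 (r : nat -> R[i]) m : Obig r m ->
  (fun N => r N / Eb R[i] m.+1 N : R[i]^o) @ \oo --> (0 : R[i]^o).
Proof.
move=> [K [K0 hK]]; apply: (@cvg0_harm _ (K * ((m.+1)`!)%:R)); first by rewrite mulr_ge0.
move=> N; set E := Eb R[i] m.+1 N; set F := ((m.+1)`!)%:R : R[i]; set X := (N.+1)%:R : R[i].
have E0 : 0 < E := Eb_gt0 m.+1 N.
have low : X ^+ m.+1 <= E * F.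
  by rewrite /X /E /F /Eb -natrX -natrM ler_nat bin_lower.
rewrite normrM normfV (gtr0_norm E0) ler_pdivrMr //.
apply: le_trans (hK N) _.
have h : X ^+ m <= F * E / X.
  by rewrite ler_pdivlMr ?ltr0Sn // -exprSr mulrC.
apply: le_trans (ler_wpM2l K0 h) _.
by rewrite !mulrA mulrAC.
Qed.

Lemma seq_limit (p1 q1 al : R[i]) m (rp rq : nat -> R[i]) :
  al != 0 -> q1 != 0 -> Obig rp m -> Obig rq m ->
  (\forall N \near \oo, al * q1 * Eb R[i] m.+1 N + rq N != 0) /\
  (fun N => ((al * p1 * Eb R[i] m.+1 N + rp N) / (al * q1 * Eb R[i] m.+1 N + rq N) : R[i]^o))
     @ \oo --> (p1 / q1 : R[i]^o).
Proof.
move=> al0 q10 Op Oq.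
set e := Eb R[i] m.+1.
have e0 N : e N != 0 by rewrite gt_eqF // Eb_gt0.
have hx (x : R[i]) (r : nat -> R[i]) : Obig r m ->
    (fun N => ((al * x * e N + r N) / e N : R[i]^o)) @ \oo --> (al * x : R[i]^o).
  move=> Or; have := @cvg_addC _ \oo _ _ (al * x) (ratio0 Or).
  have -> : (fun N => (al * x + r N / Eb R[i] m.+1 N : R[i]^o)) =
            (fun N => ((al * x * e N + r N) / e N : R[i]^o)).
    by apply: funext => N; rewrite mulrDl mulfK.
  by move=> h; exact: h.
have hS := hx p1 rp Op.
have hD := hx q1 rq Oq.
have aq0 : al * q1 != 0 by rewrite mulf_neq0.
split.
  have := cvgr_neq0 _ hD aq0.
  move=> h; near=> N.
  have : (al * q1 * e N + rq N) / e N != 0 by near: N; exact: h.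
  by apply: contra => /eqP ->; rewrite mul0r.
have := cvg_div hS hD aq0.
have -> : al * p1 / (al * q1) = p1 / q1.
  by rewrite invfM mulrACA mulfV // mul1r.
have -> : (fun N => ((al * p1 * e N + rp N) / e N / ((al * q1 * e N + rq N) / e N) : R[i]^o)) =
   (fun N => ((al * p1 * e N + rp N) / (al * q1 * e N + rq N) : R[i]^o)).
  by apply: funext => N; rewrite invf_div mulrA divfK.
by move=> h; exact: h.
Unshelve. all: by end_near. Qed.
End Analysis.

Section Left.
Variable R : realType.
Local Open Scope complex_scope.
Local Open Scope classical_set_scope.

Lemma horner_left (p : {poly R[i]}) :
  (fun t : R => (p.[t%:C] : R[i]^o)) @ (1 : R)^'- --> (p.[1] : R[i]^o).
Proof.
apply: cvg_at_left_filter.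
have -> : (1 : R[i]) = (1 : R)%:C by rewrite rmorph1.
apply: horner_cvg; exact: cvg_realC.
Qed.

Lemma near_left_neq0 (p : {poly R[i]}) : p.[1] != 0 ->
  \forall t \near (1 : R)^'-, p.[t%:C] != 0.
Proof.
move=> h; exact: (cvgr_neq0 _ (@horner_left p) h).
Qed.

Lemma near_left_pos : \forall t \near (1 : R)^'-, 0 < t.
Proof. exact: nbhs_left_gt. Qed.

End Left.

Unset Implicit Arguments.
Local Open Scope complex_scope.
Local Open Scope classical_set_scope.

Theorem mainTheorem9 (R : realType) (P Q p q : {poly R[i]}) (gn : nat -> R[i]) :
  coprimep P Q ->
  (forall z : R[i], `|z| < 1 -> ~~ root Q z) ->
  root Q 1 ->
  (forall z : R[i], (mup z Q <= mup 1 Q)%N) ->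
  q.[1] != 0 ->
  taylor_coefs P Q gn ->
  let g := fun z : R[i] => P.[z] / Q.[z] in
  let s := fun t : R => p.[t%:C] * g t%:C in
  let d := fun t : R => q.[t%:C] * g t%:C in
  let sn := pconv p gn in
  let dn := pconv q gn in
  [/\ (\forall t \near 1^'-, d t != 0),
      (fun t => (s t / d t : R[i]^o)) @ 1^'- --> (p.[1] / q.[1] : R[i]^o),
      (\forall N \near \oo, \sum_(n < N.+1) dn n != 0) &
      (fun N : nat => ((\sum_(n < N.+1) sn n) / (\sum_(n < N.+1) dn n) : R[i]^o))
        @ \oo --> (p.[1] / q.[1] : R[i]^o)].
Proof.
move=> cop hdisk hQ1 hmax hq1 htc g s d sn dn.
have [m [al [al0 hall]]] := main_seq cop hdisk hQ1 hmax htc.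
have [rp [Op ep]] := hall p.
have [rq [Oq eq]] := hall q.
have [hD hlim] := seq_limit p.[1] al0 hq1 Op Oq.
have P1 : P.[1] != 0 by apply: (coprimep_root (p := Q)); rewrite // coprimep_sym.
have hQt : \forall t \near (1 : R)^'-, Q.[t%:C] != 0.
  near=> t.
  apply: hdisk; rewrite normC_real ger0_norm.
    by rewrite -(rmorph1 (real_complex R)) ltcR.
  apply: ltW; near: t; exact: nbhs_left_gt.
have hg : \forall t \near (1 : R)^'-, g t%:C != 0.
  near=> t; rewrite /g mulf_neq0 ?invr_eq0 //.
    by near: t; exact: near_left_neq0.
  by near: t; exact: hQt.
split.
- near=> t; rewrite /d mulf_neq0 //.
    by near: t; exact: near_left_neq0.
  by near: t; exact: hg.
- have h : (fun t => (p.[t%:C] / q.[t%:C] : R[i]^o)) @ (1 : R)^'- --> (p.[1] / q.[1] : R[i]^o).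
    exact: cvg_div (horner_left (p := p)) (horner_left (p := q)) hq1.
  move=> U hU'; have := h U hU'; rewrite !nbhs_filterE /= => hU.
  near=> t; rewrite /preimage /=.
  have -> : s t / d t = p.[t%:C] / q.[t%:C].
    rewrite /s /d invfM mulrACA mulfV ?mulr1 //.
    by near: t; exact: hg.
  by near: t; exact: hU.
- near=> N; rewrite /dn eq; near: N; exact: hD.
- have -> : (fun N : nat => ((\sum_(n < N.+1) sn n) / (\sum_(n < N.+1) dn n) : R[i]^o)) =
      (fun N => ((al * p.[1] * Eb R[i] m.+1 N + rp N) / (al * q.[1] * Eb R[i] m.+1 N + rq N) : R[i]^o)).
    by apply: funext => N; rewrite /sn /dn ep eq.
  exact: hlim.
Unshelve. all: by end_near. Qed.
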